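(* Let $F$ be a PB formula, $f\equiv0$, and let $(\mathcal C,\mathcal D,O_{\mathrm{lex}},\vec x,v)$ be a configuration where $\vec x=(x_1,\dots,x_m)$ and $O_{\mathrm{lex}}(\vec u,\vec w)$ is the single constraint $\sum_{i=1}^m 2^{m-i}(w_i-u_i)\ge0$. Let $\sigma$ be a permutation of the set of literals with $\sigma(\bar\ell)=\overline{\sigma(\ell)}$ for all literals $\ell$, such that $\sigma(y)=y$ for every variable $y\notin\{x_1,\dots,x_m\}$ and $\mathcal C|_\sigma=\mathcal C$ (equality of sets of constraints). Let $$C_{LL}:\quad \sum_{i=1}^m 2^{m-i}\bigl(\sigma(x_i)-x_i\bigr)\ge0 .$$ Then, taking $\sigma$ (restricted to variables) as the witness substitution, $$\mathcal C\cup\mathcal D\cup\{f\le v-1\}\cup\{\neg C_{LL}\}\vdash \mathcal C|_\sigma\cup O_{\mathrm{lex}}(\vec x|_\sigma,\vec x)\cup\{f|_\sigma\le f\}$$ and $$\mathcal C\cup\mathcal D\cup\{f\le v-1\}\cup\{\neg C_{LL}\}\cup O_{\mathrm{lex}}(\vec x,\vec x|_\sigma)\vdash 0\ge1 .$$ Consequently, if $(\mathcal C,\mathcal D,O_{\mathrm{lex}},\vec x,v)$ is weakly valid (resp. valid), then so is $(\mathcal C,\mathcal D\cup\{C_{LL}\},O_{\mathrm{lex}},\vec x,v)$.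
   Context: A literal is a variable $x$ or $\bar x=1-x$. A PB constraint is $C:\ \sum_i a_i\ell_i\ge A$ (integers; terms may be collected and constants moved across), with negation $\neg C:\ \sum_i-a_i\ell_i\ge -A+1$. For a substitution $\omega$ (map from variables to literals, identity elsewhere, extended to literals by $\omega(\bar x)=\overline{\omega(x)}$), $C|_\omega$ replaces each literal by its image and $G|_\omega=\{D|_\omega:D\in G\}$; $f|_\omega$ likewise. $O(\vec x|_\alpha,\vec x|_\beta)$ is $O(\vec u,\vec w)$ with $u_i$ replaced by $\alpha(x_i)$ and $w_i$ by $\beta(x_i)$ (identity if no substitution). $G\vdash D$ is cutting planes derivability (axioms, literal axioms $\ell\ge0$, positive integer linear combinations, division with rounding up), extended so that $G\vdash D$ whenever $0\ge1$ is derivable from $G\cup\{\neg D\}$; it is sound. Constraints $f\le\infty-1$ are trivially true. For input $F$ and objective $f$, a configuration $(\mathcal C,\mathcal D,O,\vec z,v)$ ($v\in\mathbb Z\cup\{\infty\}$; $O$ encoding a preorder $\alpha\preceq\beta$ iff $O(\vec z|_\alpha,\vec z|_\beta)$ true; $\alpha\preceq_f\beta$ iff $\alpha\preceq\beta$ and $f(\alpha)\le f(\beta)$) is weakly valid if (1) for every integer $v'<v$, satisfiability of $F\cup\{f\le v'\}$ implies satisfiability of $\mathcal C\cup\{f\le v'\}$; (2) every total $\rho$ satisfying $\mathcal C\cup\{f\le v-1\}$ admits a total $\rho'\preceq_f\rho$ satisfying $\mathcal C\cup\mathcal D\cup\{f\le v-1\}$. It is valid if also (3) $v<\infty$ implies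 $F\cup\{f\le v\}$ satisfiable; (4) for every integer $v'<v$, satisfiability of $\mathcal C\cup\{f\le v'\}$ implies satisfiability of $F\cup\{f\le v'\}$. *)

(* Defs.v *)
From Stdlib Require Import ZArith List.
Import ListNotations.
Open Scope Z_scope.

Inductive lit (V : Type) : Type := Pos (x : V) | Neg (x : V).
Arguments Pos {V} x.
Arguments Neg {V} x.

Definition lneg {V} (l : lit V) : lit V :=
  match l with Pos x => Neg x | Neg x => Pos x end.

Record constr (V : Type) : Type := mkC { terms : list (Z * lit V); rhs : Z }.
Arguments mkC {V} terms rhs.
Arguments terms {V} c.
Arguments rhs {V} c.

Definition litval {V} (rho : V -> bool) (l : lit V) : Z :=
  match l with
  | Pos x => if rho x then 1 else 0
  | Neg x => if rho x then 0 else 1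
  end.

Definition lin_val {V} (rho : V -> bool) (ts : list (Z * lit V)) : Z :=
  fold_right (fun t acc => fst t * litval rho (snd t) + acc) 0 ts.

Definition sat_c {V} (rho : V -> bool) (c : constr V) : Prop :=
  lin_val rho (terms c) >= rhs c.

Definition sat {V} (rho : V -> bool) (G : list (constr V)) : Prop :=
  forall c, In c G -> sat_c rho c.

Definition satisfiable {V} (G : list (constr V)) : Prop :=
  exists rho : V -> bool, sat rho G.

Definition negC {V} (c : constr V) : constr V :=
  mkC (map (fun t => (- fst t, snd t)) (terms c)) (- rhs c + 1).

Definition falseC {V} : constr V := mkC [] 1.

(** Two constraints are the same up to collecting terms and moving constants
    across iff they have the same affine form (LHS - RHS) as a function of the
    variables; affine functions are determined by their values on 0/1 points. *)
Definition equivC {V} (c1 c2 : constr V) : Prop :=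
  forall rho : V -> bool,
    lin_val rho (terms c1) - rhs c1 = lin_val rho (terms c2) - rhs c2.

Definition addC {V} (c1 c2 : constr V) : constr V :=
  mkC (terms c1 ++ terms c2) (rhs c1 + rhs c2).

Definition scaleC {V} (k : Z) (c : constr V) : constr V :=
  mkC (map (fun t => (k * fst t, snd t)) (terms c)) (k * rhs c).

(** ceiling of a / d for d > 0 *)
Definition ceil_div (a d : Z) : Z := - ((- a) / d).

Definition divC {V} (d : Z) (c : constr V) : constr V :=
  mkC (map (fun t => (ceil_div (fst t) d, snd t)) (terms c)) (ceil_div (rhs c) d).

Definition lit_var {V} (l : lit V) : V := match l with Pos x => x | Neg x => x end.

Definition normalized {V} (c : constr V) : Prop :=
  NoDup (map (fun t => lit_var (snd t)) (terms c)) /\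
  Forall (fun t => 0 <= fst t) (terms c).

Inductive cp {V} (G : list (constr V)) : constr V -> Prop :=
| cp_ax c : In c G -> cp G c
| cp_lit (l : lit V) : cp G (mkC [(1, l)] 0)
| cp_add c1 c2 : cp G c1 -> cp G c2 -> cp G (addC c1 c2)
| cp_scale k c : 0 < k -> cp G c -> cp G (scaleC k c)
| cp_div d c : 0 < d -> normalized c -> cp G c -> cp G (divC d c)
| cp_equiv c c' : equivC c c' -> cp G c -> cp G c'.

Definition derives {V} (G : list (constr V)) (D : constr V) : Prop :=
  cp G D \/ cp (negC D :: G) falseC.

Definition derives_all {V} (G H : list (constr V)) : Prop :=
  forall D, In D H -> derives G D.

Definition substL {V W} (w : V -> lit W) (l : lit V) : lit W :=
  match l with Pos x => w x | Neg x => lneg (w x) end.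

Definition substT {V W} (w : V -> lit W) (ts : list (Z * lit V)) : list (Z * lit W) :=
  map (fun t => (fst t, substL w (snd t))) ts.

Definition substC {V W} (w : V -> lit W) (c : constr V) : constr W :=
  mkC (substT w (terms c)) (rhs c).

Definition set_eqC {V} (G H : list (constr V)) : Prop :=
  (forall c, In c G -> exists c', In c' H /\ equivC c c') /\
  (forall c, In c H -> exists c', In c' G /\ equivC c c').

Definition objective := list (Z * lit nat).

Definition obj_val (rho : nat -> bool) (f : objective) : Z := lin_val rho f.

Definition leC (f : objective) (k : Z) : constr nat :=
  mkC (map (fun t => (- fst t, snd t)) f) (- k).

(** v in Z u {oo}: None = oo.  The constraint f <= v - 1 (trivially true, hence
    omitted, when v = oo). *)
Definition ub (f : objective) (v : option Z) : list (constr nat) :=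
  match v with Some k => [leC f (k - 1)] | None => [] end.

Definition lt_v (v' : Z) (v : option Z) : Prop :=
  match v with Some k => v' < k | None => True end.

Definition obj_le_subst (w : nat -> lit nat) (f : objective) : constr nat :=
  mkC (f ++ map (fun t => (- fst t, substL w (snd t))) f) 0.

(** Order encodings O(u, w): constraints over the variables u_i = (false, i),
    w_i = (true, i) (0-indexed i). *)
Definition ord_enc := list (constr (bool * nat)).

Definition O_inst (a b : nat -> lit nat) (z : list nat) (O : ord_enc) : list (constr nat) :=
  map (substC (fun p : bool * nat =>
                 if fst p then b (nth (snd p) z 0%nat) else a (nth (snd p) z 0%nat))) O.

Definition preceq (O : ord_enc) (z : list nat) (alpha beta : nat -> bool) : Prop :=
  sat (fun p : bool * nat =>
         if fst p then beta (nth (snd p) z 0%nat) else alpha (nth (snd p) z 0%nat)) O.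

Definition preceq_f (O : ord_enc) (z : list nat) (f : objective)
  (alpha beta : nat -> bool) : Prop :=
  preceq O z alpha beta /\ obj_val alpha f <= obj_val beta f.

Definition weakly_valid (F : list (constr nat)) (f : objective)
  (C D : list (constr nat)) (O : ord_enc) (z : list nat) (v : option Z) : Prop :=
  (forall v' : Z, lt_v v' v ->
     satisfiable (F ++ [leC f v']) -> satisfiable (C ++ [leC f v'])) /\
  (forall rho : nat -> bool, sat rho (C ++ ub f v) ->
     exists rho' : nat -> bool,
       preceq_f O z f rho' rho /\ sat rho' (C ++ D ++ ub f v)).

Definition valid (F : list (constr nat)) (f : objective)
  (C D : list (constr nat)) (O : ord_enc) (z : list nat) (v : option Z) : Prop :=
  weakly_valid F f C D O z v /\
  (forall k : Z, v = Some k -> satisfiable (F ++ [leC f k])) /\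
  (forall v' : Z, lt_v v' v ->
     satisfiable (C ++ [leC f v']) -> satisfiable (F ++ [leC f v'])).

(** O_lex(u, w) :  sum_{i=1}^m 2^(m-i) (w_i - u_i) >= 0  (0-indexed: j = i-1) *)
Definition lex_coef (m j : nat) : Z := 2 ^ Z.of_nat (m - 1 - j).

Definition O_lex (m : nat) : ord_enc :=
  [mkC (flat_map (fun j => [(lex_coef m j, Pos (true, j));
                            (- lex_coef m j, Pos (false, j))]) (seq 0 m)) 0].

Definition C_LL (sigma : lit nat -> lit nat) (x : list nat) : constr nat :=
  let m := length x in
  mkC (flat_map (fun j => [(lex_coef m j, sigma (Pos (nth j x 0%nat)));
                           (- lex_coef m j, Pos (nth j x 0%nat))]) (seq 0 m)) 0.

Definition lit_perm (sigma : lit nat -> lit nat) : Prop :=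
  exists tau : lit nat -> lit nat,
    (forall l, tau (sigma l) = l) /\ (forall l, sigma (tau l) = l).

Definition restrict_vars (sigma : lit nat -> lit nat) : nat -> lit nat :=
  fun y => sigma (Pos y).

(* Main.v *)
Require Import Defs.
From Stdlib Require Import ZArith List Lia.
Import ListNotations.
Open Scope Z_scope.

Lemma lin_val_nil {V} (rho : V -> bool) : lin_val rho [] = 0.
Proof. reflexivity. Qed.
Lemma lin_val_cons {V} (rho : V -> bool) t ts :
  lin_val rho (t :: ts) = fst t * litval rho (snd t) + lin_val rho ts.
Proof. reflexivity. Qed.

Lemma lin_val_app {V} (rho : V -> bool) a b :
  lin_val rho (a ++ b) = lin_val rho a + lin_val rho b.
Proof. induction a as [|t a IH]; simpl app; rewrite ?lin_val_cons, ?lin_val_nil; [lia|rewrite IH; lia]. Qed.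

Definition comp {V W} (rho : W -> bool) (w : V -> lit W) : V -> bool :=
  fun y => Z.eqb (litval rho (w y)) 1.

Lemma litval_subst {V W} (rho : W -> bool) (w : V -> lit W) l :
  litval rho (substL w l) = litval (comp rho w) l.
Proof. destruct l as [y|y]; simpl; unfold comp; destruct (w y) as [z|z]; simpl;
  destruct (rho z); reflexivity. Qed.

Lemma lin_val_substT {V W} (rho : W -> bool) (w : V -> lit W) ts :
  lin_val rho (substT w ts) = lin_val (comp rho w) ts.
Proof. induction ts as [|t ts IH]; [reflexivity|]. unfold substT in *; simpl map.
  rewrite !lin_val_cons, IH; simpl; rewrite litval_subst; reflexivity. Qed.

Lemma lin_val_negmap {V} (rho : V -> bool) ts :
  lin_val rho (map (fun t => (- fst t, snd t)) ts) = - lin_val rho ts.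
Proof. induction ts as [|t ts IH]; [reflexivity|]. simpl map.
  rewrite !lin_val_cons, IH; simpl; lia. Qed.

Lemma lin_val_negsubst {V W} (rho : W -> bool) (w : V -> lit W) ts :
  lin_val rho (map (fun t => (- fst t, substL w (snd t))) ts) = - lin_val (comp rho w) ts.
Proof. induction ts as [|t ts IH]; [reflexivity|]. simpl map.
  rewrite !lin_val_cons, IH; simpl; rewrite litval_subst; lia. Qed.

Definition Fs (c h : nat -> Z) (l : list nat) : Z :=
  fold_right (fun j acc => c j * h j + acc) 0 l.

Lemma Fs_ext c h1 h2 l : (forall j, h1 j = h2 j) -> Fs c h1 l = Fs c h2 l.
Proof. intro H; induction l; simpl; [reflexivity|]. unfold Fs in *; simpl; rewrite H, IHl; reflexivity. Qed.

Lemma lv_pairs {V} (rho : V -> bool) (c : nat -> Z) (A B : nat -> lit V) l :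
  lin_val rho (flat_map (fun j => [(c j, A j); (- c j, B j)]) l) =
  Fs c (fun j => litval rho (A j)) l - Fs c (fun j => litval rho (B j)) l.
Proof. induction l as [|a l IH]; [reflexivity|]. cbn [flat_map app].
  rewrite !lin_val_cons, IH. unfold Fs; cbn [fold_right fst snd]. lia. Qed.

Lemma Fs_nonneg c h l : (forall j, 0 <= c j) -> (forall j, 0 <= h j) -> 0 <= Fs c h l.
Proof. intros Hc Hh; induction l; simpl; [lia|]. unfold Fs in *; simpl.
  specialize (Hc a); specialize (Hh a); nia. Qed.

Lemma cp_m1 {V} (G : list (constr V)) (y : V) : cp G (mkC [] (-1)).
Proof.
  apply cp_equiv with (addC (mkC [(1, Pos y)] 0) (mkC [(1, Neg y)] 0)).
  - intro rho; simpl. unfold lin_val; simpl. destruct (rho y); reflexivity.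
  - apply cp_add; apply cp_lit.
Qed.

Lemma cp_0 {V} (G : list (constr V)) (y : V) : cp G (mkC [] 0).
Proof.
  change (mkC (V:=V) [] 0) with (divC 2 (mkC (V:=V) [] (-1))).
  apply cp_div; [lia| |apply (cp_m1 G y)].
  split; simpl; constructor.
Qed.

Lemma equivC_sym {V} (c1 c2 : constr V) : equivC c1 c2 -> equivC c2 c1.
Proof. intros H rho; symmetry; apply H. Qed.

Lemma equivC_sat {V} (rho : V -> bool) c1 c2 : equivC c1 c2 -> sat_c rho c1 -> sat_c rho c2.
Proof. unfold sat_c; intros H H1; specialize (H rho); lia. Qed.

Lemma sat_substC {V W} (rho : W -> bool) (w : V -> lit W) c :
  sat_c rho (substC w c) <-> sat_c (comp rho w) c.
Proof. unfold sat_c, substC; simpl; rewrite lin_val_substT; tauto. Qed.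

Lemma sat_app {V} (rho : V -> bool) a b : sat rho (a ++ b) <-> sat rho a /\ sat rho b.
Proof. unfold sat; split.
  - intro H; split; intros c Hc; apply H; apply in_app_iff; auto.
  - intros [H1 H2] c Hc; apply in_app_iff in Hc; destruct Hc; auto. Qed.

Lemma sat_ub f v (rho1 rho2 : nat -> bool) : (forall rho, obj_val rho f = 0) ->
  sat rho1 (ub f v) -> sat rho2 (ub f v).
Proof. intros Hf H. destruct v as [k|]; simpl in *; intros c Hc; [|destruct Hc].
  destruct Hc as [<-|[]]. specialize (H _ (or_introl eq_refl)).
  unfold sat_c, leC in *; simpl in *. rewrite lin_val_negmap in *.
  unfold obj_val in Hf. rewrite Hf in *. exact H. Qed.

Lemma litval01 {V} (rho : V -> bool) l : litval rho l = 0 \/ litval rho l = 1.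
Proof. destruct l; simpl; destruct (rho x); auto. Qed.

Definition L (x : list nat) (rho : nat -> bool) : Z :=
  Fs (lex_coef (length x)) (fun j => litval rho (Pos (nth j x 0%nat))) (seq 0 (length x)).

Lemma L_nonneg x rho : 0 <= L x rho.
Proof. apply Fs_nonneg; intros; [unfold lex_coef; apply Z.pow_nonneg; lia|].
  simpl; destruct (rho _); lia. Qed.

Lemma preceq_lex x alpha beta :
  preceq (O_lex (length x)) x alpha beta <-> L x alpha <= L x beta.
Proof.
  unfold preceq, sat, O_lex. split.
  - intro H. specialize (H _ (or_introl eq_refl)). unfold sat_c in H; simpl in H.
    rewrite lv_pairs in H. unfold L. simpl in *. lia.
  - intros H c [<-|[]]. unfold sat_c; simpl. rewrite lv_pairs. unfold L in H. simpl in *. lia.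
Qed.

Lemma CLL_sat sigma x rho :
  sat_c rho (C_LL sigma x) <-> L x rho <= L x (comp rho (restrict_vars sigma)).
Proof.
  unfold sat_c, C_LL; simpl. rewrite lv_pairs. unfold L.
  erewrite (Fs_ext _ (fun j => litval rho (sigma (Pos (nth j x 0%nat))))
     (fun j => litval (comp rho (restrict_vars sigma)) (Pos (nth j x 0%nat))))
   by (intro j; rewrite <- litval_subst; reflexivity).
  lia.
Qed.

Lemma core (f : objective) (C D : list (constr nat)) (x : list nat) (v : option Z)
  (sigma : lit nat -> lit nat) :
  (forall rho : nat -> bool, obj_val rho f = 0) ->
  set_eqC (map (substC (restrict_vars sigma)) C) C ->
  (forall rho, sat rho (C ++ ub f v) -> exists rho',
       preceq_f (O_lex (length x)) x f rho' rho /\ sat rho' (C ++ D ++ ub f v)) ->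
  forall N rho, (Z.to_nat (L x rho) < N)%nat -> sat rho (C ++ D ++ ub f v) ->
  exists rho'', L x rho'' <= L x rho /\ sat rho'' (C ++ (D ++ [C_LL sigma x]) ++ ub f v).
Proof.
  intros Hf Hset Hwv N. induction N as [|N IH]; intros rho HN Hs; [lia|].
  destruct (Z_ge_dec (lin_val rho (terms (C_LL sigma x))) (rhs (C_LL sigma x))) as [Hc|Hc].
  - exists rho; split; [lia|]. apply sat_app in Hs as [HC Hs]; apply sat_app in Hs as [HD Hu].
    apply sat_app; split; [auto|]. apply sat_app; split; [|auto].
    apply sat_app; split; [auto|]. intros c [<-|[]]; exact Hc.
  - assert (Hlt : L x (comp rho (restrict_vars sigma)) < L x rho).
    { destruct (Z_lt_ge_dec (L x (comp rho (restrict_vars sigma))) (L x rho)); auto.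
      exfalso; apply Hc. apply CLL_sat. lia. }
    set (rho2 := comp rho (restrict_vars sigma)) in *.
    apply sat_app in Hs as [HC Hs]; apply sat_app in Hs as [HD Hu].
    assert (H2 : sat rho2 (C ++ ub f v)).
    { apply sat_app; split.
      - intros c Hcin. destruct (proj1 Hset (substC (restrict_vars sigma) c)) as [c' [Hc' He]].
        { apply in_map; auto. }
        apply sat_substC. apply (equivC_sat _ c'); [apply equivC_sym; auto|]. apply HC; auto.
      - apply (sat_ub f v rho); auto. }
    destruct (Hwv rho2 H2) as [rho3 [[Hp _] Hs3]].
    apply preceq_lex in Hp.
    destruct (IH rho3) as [rho4 [H4 Hs4]]; auto.
    + pose proof (L_nonneg x rho3). lia.
    + exists rho4; split; auto. lia.
Qed.

Theorem mainTheorem9 (F : list (constr nat)) (f : objective)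
  (C D : list (constr nat)) (x : list nat) (v : option Z)
  (sigma : lit nat -> lit nat) :
  (forall rho : nat -> bool, obj_val rho f = 0) ->
  lit_perm sigma ->
  (forall l : lit nat, sigma (lneg l) = lneg (sigma l)) ->
  (forall y : nat, ~ In y x -> sigma (Pos y) = Pos y) ->
  set_eqC (map (substC (restrict_vars sigma)) C) C ->
  let w := restrict_vars sigma in
  let G := C ++ D ++ ub f v ++ [negC (C_LL sigma x)] in
  derives_all G
    (map (substC w) C ++ O_inst w Pos x (O_lex (length x)) ++ [obj_le_subst w f])
  /\ derives (G ++ O_inst Pos w x (O_lex (length x))) falseC
  /\ (weakly_valid F f C D (O_lex (length x)) x v ->
      weakly_valid F f C (D ++ [C_LL sigma x]) (O_lex (length x)) x v)
  /\ (valid F f C D (O_lex (length x)) x v ->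
      valid F f C (D ++ [C_LL sigma x]) (O_lex (length x)) x v).
Proof.
  intros Hf _ _ _ Hset w G.
  assert (HinN : In (negC (C_LL sigma x)) G).
  { unfold G; rewrite !in_app_iff; simpl; tauto. }
  assert (WV : weakly_valid F f C D (O_lex (length x)) x v ->
      weakly_valid F f C (D ++ [C_LL sigma x]) (O_lex (length x)) x v).
  { intros [W1 W2]; split; [exact W1|].
    intros rho Hr. destruct (W2 rho Hr) as [rho' [[Hp _] Hs]].
    destruct (core f C D x v sigma Hf Hset W2 (S (Z.to_nat (L x rho'))) rho') as [r [Hl Hs']];
      auto.
    exists r; split; auto. split.
    - apply preceq_lex. apply preceq_lex in Hp. lia.
    - unfold obj_val in *; rewrite !Hf; lia. }
  split; [|split; [|split]].
  - intros Dc HD. rewrite !in_app_iff in HD. destruct HD as [H1|[H2|H3]].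
    + apply in_map_iff in H1 as [c0 [<- Hc0]].
      destruct (proj1 Hset (substC w c0)) as [c' [Hc' He]]; [apply in_map; auto|].
      left. apply cp_equiv with c'; [apply equivC_sym; auto|].
      apply cp_ax. unfold G; apply in_app_iff; auto.
    + unfold O_inst, O_lex in H2; simpl in H2. destruct H2 as [<-|[]].
      left. apply cp_equiv with (addC (negC (C_LL sigma x)) (mkC [] (-1))).
      * intro rho. unfold addC, negC, C_LL, substC; simpl.
        rewrite lin_val_app, lin_val_negmap, lin_val_substT, !lv_pairs.
        unfold w, restrict_vars, comp. simpl.
        rewrite (Fs_ext _ (fun j => if litval rho (sigma (Pos (nth j x 0%nat))) =? 1 then 1 else 0) (fun j => litval rho (sigma (Pos (nth j x 0%nat))))) by (intro j; destruct (litval01 rho (sigma (Pos (nth j x 0%nat)))) as [E|E]; rewrite E; reflexivity).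
        rewrite (Fs_ext _ (fun j => if (if rho (nth j x 0%nat) then 1 else 0) =? 1 then 1 else 0) (fun j => if rho (nth j x 0%nat) then 1 else 0)) by (intro j; destruct (rho (nth j x 0%nat)); reflexivity).
        lia.
      * apply cp_add; [apply cp_ax; auto|apply (cp_m1 _ 0%nat)].
    + destruct H3 as [<-|[]]. left. apply cp_equiv with (mkC [] 0); [|apply (cp_0 _ 0%nat)].
      intro rho. unfold obj_le_subst; simpl. rewrite lin_val_app, lin_val_negsubst.
      unfold obj_val in Hf; rewrite !Hf. reflexivity.
  - left. unfold O_inst, O_lex; simpl.
    apply cp_equiv with (addC (negC (C_LL sigma x)) (substC
      (fun p : bool * nat => if fst p then w (nth (snd p) x 0%nat) else Pos (nth (snd p) x 0%nat))
      (mkC (flat_map (fun j => [(lex_coef (length x) j, Pos (true, j));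
                            (- lex_coef (length x) j, Pos (false, j))]) (seq 0 (length x))) 0))).
    + intro rho. unfold addC, negC, C_LL, substC; simpl.
      rewrite lin_val_app, lin_val_negmap, lin_val_substT, !lv_pairs.
      unfold w, restrict_vars, comp. simpl.
        rewrite (Fs_ext _ (fun j => if litval rho (sigma (Pos (nth j x 0%nat))) =? 1 then 1 else 0) (fun j => litval rho (sigma (Pos (nth j x 0%nat))))) by (intro j; destruct (litval01 rho (sigma (Pos (nth j x 0%nat)))) as [E|E]; rewrite E; reflexivity).
        rewrite (Fs_ext _ (fun j => if (if rho (nth j x 0%nat) then 1 else 0) =? 1 then 1 else 0) (fun j => if rho (nth j x 0%nat) then 1 else 0)) by (intro j; destruct (rho (nth j x 0%nat)); reflexivity).
        lia.
    + apply cp_add; apply cp_ax; apply in_app_iff; [left; auto|right; simpl; auto].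
  - exact WV.
  - intros [H1 [H2 H3]]. split; [apply WV; auto|split; auto].
Qed.
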